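(* Let $f$ be an $n$-variable Boolean function. Then ${LDA}(f)=\min_{1\le k\le n}\mu_k(f+1)$. Furthermore, if $k\ge{LDA}(f)$, then $\mu_k(f+1)={LDA}(f)$.
   Context: An $n$-variable Boolean function is a map $\mathbb{F}_2^n\to\mathbb{F}_2$, with algebraic degree $\deg$ the degree of its algebraic normal form. ${LDA}(h)$ is the minimum algebraic degree of a nonzero $g$ with $h\cdot g=0$. For $1\le k\le n$, ${MUL}_k(h)=\{h\cdot g: g \text{ an } n\text{-variable Boolean function with } \deg(g)\le k\}$ and $\mu_k(h)$ is the minimum algebraic degree of the nonzero elements of ${MUL}_k(h)$. *)

(* Defs.v *)
(* Boolean functions F_2^n -> F_2, with F_2 = bool
   (addition = xor (addb), multiplication = andb). *)
From mathcomp Require Import all_boot all_order.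
Set Implicit Arguments. Unset Strict Implicit. Unset Printing Implicit Defensive.

Definition vec (n : nat) := {ffun 'I_n -> bool}.
Definition bfun (n : nat) := {ffun vec n -> bool}.

Definition bf_add n (f g : bfun n) : bfun n := [ffun x => f x (+) g x].
Definition bf_mul n (f g : bfun n) : bfun n := [ffun x => f x && g x].
Definition bf_zero n : bfun n := [ffun _ => false].
Definition bf_one n : bfun n := [ffun _ => true].

Definition wt n (u : vec n) : nat := #|[set i | u i]|.

Definition covered n (x u : vec n) : bool := [forall i, x i ==> u i].

(* coefficient of the monomial prod_{i : u i} x_i in the algebraic normal
   form of f (Moebius transform): a_u = XOR_{x <= u} f(x) *)
Definition anf_coef n (f : bfun n) (u : vec n) : bool :=
  \big[addb/false]_(x : vec n | covered x u) f x.

(* algebraic degree: the largest weight of a monomial occurring in the ANF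
   (deg 0 = 0 by convention; it never matters below) *)
Definition deg n (f : bfun n) : nat :=
  \max_(u : vec n | anf_coef f u) wt u.

(* LDA(h): minimum degree of a nonzero annihilator g (h*g = 0).
   Convention: n.+1 (playing the role of +infinity) when no such g exists. *)
Definition LDA n (h : bfun n) : nat :=
  \big[minn/n.+1]_(g : bfun n | (g != bf_zero n) && (bf_mul h g == bf_zero n))
     deg g.

(* mu_k(h): minimum degree of the nonzero elements of
   MUL_k(h) = { h*g : deg g <= k }.  Convention n.+1 if there are none. *)
Definition mu n (k : nat) (h : bfun n) : nat :=
  \big[minn/n.+1]_(g : bfun n | (deg g <= k) && (bf_mul h g != bf_zero n))
     deg (bf_mul h g).

(* Main.v *)
Require Import Defs.
From mathcomp Require Import all_boot all_order.

Lemma bm_le_idx (I : Type) (r : seq I) (P : pred I) (F : I -> nat) m :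
  \big[minn/m]_(j <- r | P j) F j <= m.
Proof.
elim/big_rec: _ => // i x _ H; exact: leq_trans (geq_minr _ _) H.
Qed.

Lemma bm_le_F (I : eqType) (r : seq I) (P : pred I) (F : I -> nat) m i :
  i \in r -> P i -> \big[minn/m]_(j <- r | P j) F j <= F i.
Proof.
elim: r => [|j r IH] //=. rewrite in_cons big_cons => /orP [/eqP <- | ir] Pi.
  by rewrite Pi geq_minl.
case: (P j); last exact: IH.
exact: leq_trans (geq_minr _ _) (IH ir Pi).
Qed.

Lemma bm_ge (I : Type) (r : seq I) (P : pred I) (F : I -> nat) m c :
  (forall i, P i -> c <= F i) -> c <= m -> c <= \big[minn/m]_(j <- r | P j) F j.
Proof.
move=> H Hm; elim/big_ind: _ => //.
  by move=> x y Hx Hy; rewrite leq_min Hx Hy.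
Qed.

Lemma bm_wit (I : Type) (r : seq I) (P : pred I) (F : I -> nat) m :
  \big[minn/m]_(j <- r | P j) F j = m \/
  exists i, P i /\ \big[minn/m]_(j <- r | P j) F j = F i.
Proof.
pose K x := x = m \/ exists i, P i /\ x = F i.
apply: (@big_ind _ K) => //; first by left.
  move=> x y Hx Hy; rewrite /minn; by case: ifP.
by move=> i Pi; right; exists i.
Qed.

Theorem proposition9 (n : nat) (n_gt0 : 0 < n) (f : bfun n) :
  LDA f = \big[minn/n.+1]_(1 <= k < n.+1) mu k (bf_add f (bf_one n))
  /\ (forall k : nat, 1 <= k <= n -> LDA f <= k ->
        mu k (bf_add f (bf_one n)) = LDA f).
Proof.
set h := bf_add f (bf_one n).
have Ha : forall g, bf_mul f (bf_mul h g) = bf_zero n.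
  move=> g; apply/ffunP => x; rewrite !ffunE.
  by case: (f x).
have Hb : forall g, bf_mul f g = bf_zero n -> bf_mul h g = g.
  move=> g /ffunP H; apply/ffunP => x; move: (H x); rewrite !ffunE.
  by case: (f x); case: (g x).
have HL1 : LDA f <= n.+1 by apply: bm_le_idx.
have Hc : forall k, LDA f <= mu k h.
  move=> k; apply: bm_ge => // g /andP [_ Hg].
  apply: (@bm_le_F _ _ _ _ _ (bf_mul h g)); first exact: mem_index_enum.
  by rewrite Hg Ha eqxx.
have Hd : LDA f <= n -> exists g0, [/\ g0 != bf_zero n, bf_mul f g0 = bf_zero n
           & deg g0 = LDA f].
  move=> Hle; case: (@bm_wit _ (index_enum (bfun n))
     (fun g => (g != bf_zero n) && (bf_mul f g == bf_zero n)) (@deg n) n.+1).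
    by move=> E; move: Hle; rewrite /LDA E ltnn.
  move=> [g [PP E]]; case/andP: PP => g0 /eqP g1; exists g; split => //.
have P2 : forall k : nat, 1 <= k <= n -> LDA f <= k -> mu k h = LDA f.
  move=> k /andP [k1 kn] Hk.
  have [g0 [g00 g01 g02]] := Hd (leq_trans Hk kn).
  apply/eqP; rewrite eqn_leq Hc andbT.
  rewrite -g02 -{1}(Hb _ g01).
  apply: bm_le_F; first exact: mem_index_enum.
  by rewrite g02 Hk Hb.
split => //.
apply/eqP; rewrite eqn_leq; apply/andP; split.
  by apply: bm_ge.
case: (leqP (LDA f) n) => Hle; last first.
  have -> : LDA f = n.+1 by apply/eqP; rewrite eqn_leq HL1 Hle.
  exact: bm_le_idx.
have Hk : 1 <= maxn 1 (LDA f) <= n by rewrite leq_maxl geq_max n_gt0 Hle.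
rewrite -{1}(P2 _ Hk (leq_maxr _ _)).
apply: bm_le_F => //.
by rewrite mem_index_iota ltnS.
Qed.
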